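(* Let $l_0\ge1$ be an integer and consider the string $\mathbf s=``G_{\mu\mu}G^{(\mu)}_{\nu\nu}S_{\mu\nu}''$. Let $w=a_1a_2\cdots a_{4l_0}$ be any binary sequence of length $4l_0$ such that $\mathbf s_w\ne\emptyset$. Then either $\mathcal F_{\rm off}(\mathbf s_w)\ge2l_0$, or $\mathbf s_w$ is maximally expanded.
   Context: Fix two distinct symbols (indices) $\mu,\nu$. A string is a finite concatenation of symbols from the alphabet $\mathfrak A=\{G_{\alpha\beta},\,G_{\alpha\alpha}^{-1},\,S_{\alpha\beta}:\alpha,\beta\in\{\mu,\nu\}\}\cup\{G^{(\nu)}_{\mu\mu},G^{(\mu)}_{\nu\nu},(G^{(\nu)}_{\mu\mu})^{-1},(G^{(\mu)}_{\nu\nu})^{-1}\}$; $\emptyset$ denotes the empty string (strings may carry a sign $\pm$, which is irrelevant here). The maximally expanded symbols are $\mathfrak A_{\max}=\{G_{\mu\nu},G_{\nu\mu},G^{(\nu)}_{\mu\mu},G^{(\mu)}_{\nu\nu},(G^{(\nu)}_{\mu\mu})^{-1},(G^{(\mu)}_{\nu\nu})^{-1},S_{\mu\mu},S_{\nu\nu},S_{\mu\nu},S_{\nu\mu}\}$; a string is maximally expanded if all its symbols lie in $\mathfrak A_{\max}$. The off-diagonal symbols are $G_{\mu\nu},G_{\nu\mu},S_{\mu\nu},S_{\nu\mu}$; $\mathcal F_{\rm off}(\mathbf s)$ is the number of off-diagonal symbols in $\mathbf s$ (counted with multiplicity). String operators, with $\alpha\ne\beta\in\{\mu,\nu\}$: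 (i) $\tau_0$: find the first occurrence in $\mathbf s$ of a symbol $G_{\alpha\alpha}$ or $G_{\alpha\alpha}^{-1}$ (for some $\alpha\in\{\mu,\nu\}$; these are the symbols without superscript); replace $G_{\alpha\alpha}$ by $G^{(\beta)}_{\alpha\alpha}$, resp. $G_{\alpha\alpha}^{-1}$ by $(G^{(\beta)}_{\alpha\alpha})^{-1}$; if none is found, $\tau_0(\mathbf s)=\mathbf s$. (ii) $\tau_1$: find the same first occurrence; replace $G_{\alpha\alpha}$ by $G_{\alpha\beta}G_{\beta\alpha}G_{\beta\beta}^{-1}$, resp. $G_{\alpha\alpha}^{-1}$ by $-G_{\alpha\beta}G_{\beta\alpha}G_{\alpha\alpha}^{-1}(G^{(\beta)}_{\alpha\alpha})^{-1}G_{\beta\beta}^{-1}$; if none is found, $\tau_1(\mathbf s)=\emptyset$. (iii) $\rho$ replaces each symbol $G_{\alpha\beta}$ ($\alpha\ne\beta$) in $\mathbf s$ by $G_{\alpha\alpha}G^{(\alpha)}_{\beta\beta}S_{\alpha\beta}$. All operators map $\emptyset$ to $\emptyset$. For a binary sequence $w=a_1\cdots a_m$, $\mathbf s_w:=\rho^{a_m}\tau_{a_m}\cdots\rho^{a_1}\tau_{a_1}(\mathbf s)$, where $\rho^0$ is the identity and $\rho^1=\rho$. *)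

(* Defs.v *)
From Stdlib Require Import List Arith.
Import ListNotations.

Inductive idx : Type := mu | nu.

Definition other (a : idx) : idx := match a with mu => nu | nu => mu end.

Definition idx_eqb (a b : idx) : bool :=
  match a, b with mu, mu | nu, nu => true | _, _ => false end.

(* Alphabet:
   G a b      = G_{ab}            (a, b arbitrary)
   Ginv a     = G_{aa}^{-1}
   S a b      = S_{ab}
   Gsup a     = G^{(other a)}_{aa}        (i.e. G^{(nu)}_{mu mu} or G^{(mu)}_{nu nu})
   Gsupinv a  = (G^{(other a)}_{aa})^{-1} *)
Inductive sym : Type :=
| G (a b : idx)
| Ginv (a : idx)
| S (a b : idx)
| Gsup (a : idx)
| Gsupinv (a : idx).

(* A string is a finite list of symbols; the sign is dropped (irrelevant);
   the empty string (emptyset) is the empty list. *)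
Definition str := list sym.
Definition empty_str : str := [].

Fixpoint tau0 (s : str) : str :=
  match s with
  | [] => []
  | x :: t =>
    match x with
    | G a b => if idx_eqb a b then Gsup a :: t else x :: tau0 t
    | Ginv a => Gsupinv a :: t
    | _ => x :: tau0 t
    end
  end.

Fixpoint tau1_aux (s : str) : option str :=
  match s with
  | [] => None
  | x :: t =>
    match x with
    | G a b =>
      if idx_eqb a b
      then Some ([G a (other a); G (other a) a; Ginv (other a)] ++ t)
      else option_map (cons x) (tau1_aux t)
    | Ginv a =>
      (* sign (-) dropped *)
      Some ([G a (other a); G (other a) a; Ginv a; Gsupinv a; Ginv (other a)] ++ t)
    | _ => option_map (cons x) (tau1_aux t)
    end
  end.

Definition tau1 (s : str) : str :=
  match tau1_aux s with Some s' => s' | None => empty_str end.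

(* rho: G_{ab} (a <> b)  |->  G_{aa} G^{(a)}_{bb} S_{ab};  note G^{(a)}_{bb} = Gsup b *)
Fixpoint rho (s : str) : str :=
  match s with
  | [] => []
  | x :: t =>
    match x with
    | G a b => if idx_eqb a b then x :: rho t
               else G a a :: Gsup b :: S a b :: rho t
    | _ => x :: rho t
    end
  end.

Definition step (s : str) (a : bool) : str :=
  if a then rho (tau1 s) else tau0 s.

(* s_w = rho^{a_m} tau_{a_m} ... rho^{a_1} tau_{a_1} (s), w = a_1 ... a_m *)
Definition apply_word (s : str) (w : list bool) : str := fold_left step w s.

Definition max_sym (x : sym) : bool :=
  match x with
  | G a b => negb (idx_eqb a b)
  | Ginv _ => false
  | S _ _ => true
  | Gsup _ => true
  | Gsupinv _ => true
  end.

Definition maximally_expanded (s : str) : Prop := forallb max_sym s = true.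

Definition off_diag (x : sym) : bool :=
  match x with
  | G a b | S a b => negb (idx_eqb a b)
  | _ => false
  end.

Definition F_off (s : str) : nat := length (filter off_diag s).

Definition s0 : str := [G mu mu; Gsup nu; S mu nu].

(* Main.v *)
Require Import Defs.
From Stdlib Require Import List Arith Lia.
Import ListNotations.

Definition isU (x : sym) : bool :=
  match x with G a b => idx_eqb a b | Ginv _ => true | _ => false end.
Definition isOG (x : sym) : bool :=
  match x with G a b => negb (idx_eqb a b) | _ => false end.
Definition U (s : str) : nat := length (filter isU s).
Definition OG (s : str) : nat := length (filter isOG s).

Fixpoint ones (w : list bool) : nat :=
  match w with [] => 0 | true :: t => 1 + ones t | false :: t => ones t end.
Fixpoint zeros (w : list bool) : nat :=
  match w with [] => 0 | true :: t => zeros t | false :: t => 1 + zeros t end.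

Lemma oz_len w : ones w + zeros w = length w.
Proof. induction w as [|[] t IH]; simpl; lia. Qed.

Ltac dsym x := destruct x as [a b|a|a b|a|a]; try destruct a; try destruct b.

Lemma apply_nil w : apply_word [] w = [].
Proof. induction w as [|[] t IH]; simpl; auto. Qed.

Lemma tau0_noU s : U s = 0 -> tau0 s = s.
Proof.
  unfold U; induction s as [|x t IH]; simpl; auto.
  dsym x; simpl; intro H; try discriminate; rewrite IH; auto.
Qed.

Lemma tau1_noU s : U s = 0 -> tau1_aux s = None.
Proof.
  unfold U; induction s as [|x t IH]; simpl; auto.
  dsym x; simpl; intro H; try discriminate; rewrite IH; auto.
Qed.

Lemma zero_case s w : U s = 0 -> apply_word s w <> [] -> apply_word s w = s.
Proof.
  revert s; induction w as [|[] t IH]; intros s H1 H2; simpl in *; auto.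
  - unfold step in *. unfold tau1 in *. rewrite tau1_noU in * by auto.
    simpl in H2. rewrite apply_nil in H2. congruence.
  - unfold step in *. rewrite tau0_noU in * by auto. auto.
Qed.

Lemma tau0_props s : 0 < U s ->
  U (tau0 s) + 1 = U s /\ F_off (tau0 s) = F_off s /\ OG (tau0 s) = OG s.
Proof.
  unfold U, F_off, OG; induction s as [|x t IH]; simpl; [lia|].
  dsym x; simpl; intro H; try (split; [lia|auto]);
  destruct (IH H) as [? [? ?]]; lia.
Qed.

Lemma tau1_props s s' : tau1_aux s = Some s' ->
  F_off s' = F_off s + 2 /\ OG s' = OG s + 2 /\ U s' <= U s + 1.
Proof.
  unfold U, F_off, OG; revert s'; induction s as [|x t IH]; simpl; intros s' H;
    [discriminate|].
  dsym x; simpl in *; try (injection H; intros; subst; simpl; lia);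
  (destruct (tau1_aux t) as [u|] eqn:E; simpl in H; [|discriminate]);
  injection H; intros; subst; simpl; destruct (IH u eq_refl) as [? [? ?]]; lia.
Qed.

Lemma rho_props s :
  F_off (rho s) = F_off s /\ OG (rho s) = 0 /\ U (rho s) = U s + OG s.
Proof.
  unfold U, F_off, OG; induction s as [|x t IH]; simpl; auto.
  dsym x; simpl; lia.
Qed.

Lemma main_inv w : forall s, OG s = 0 -> apply_word s w <> [] ->
  F_off (apply_word s w) = F_off s + 2 * ones w /\ OG (apply_word s w) = 0 /\
  (U (apply_word s w) = 0 \/ U (apply_word s w) + zeros w <= U s + 3 * ones w).
Proof.
  induction w as [|a t IH]; intros s H0 H; simpl in *.
  - split; [lia|split; auto; right; lia].
  - destruct (Nat.eq_dec (U s) 0) as [HU|HU].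
    + pose proof (zero_case s (a :: t) HU H) as E. simpl in E.
      rewrite E. simpl in *.
      destruct a.
      * exfalso. unfold step, tau1 in H. rewrite tau1_noU in H by auto.
        simpl in H. rewrite apply_nil in H. congruence.
      * unfold step in *. rewrite tau0_noU in * by auto.
        destruct (IH s H0 H) as [A [B C]]. rewrite E in A, B, C.
        split; [lia|split; auto].
    + destruct a; unfold step in *.
      * unfold tau1 in *. destruct (tau1_aux s) as [s'|] eqn:E.
        2:{ simpl in H. rewrite apply_nil in H. congruence. }
        destruct (tau1_props s s' E) as [A1 [A2 A3]].
        destruct (rho_props s') as [B1 [B2 B3]].
        destruct (IH (rho s') B2 H) as [C1 [C2 C3]].
        split; [lia|split; auto; lia].
      * destruct (tau0_props s ltac:(lia)) as [A1 [A2 A3]].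
        destruct (IH (tau0 s) ltac:(lia) H) as [C1 [C2 C3]].
        split; [lia|split; auto; lia].
Qed.

Lemma maxexp s : OG s = 0 -> U s = 0 -> maximally_expanded s.
Proof.
  unfold OG, U, maximally_expanded; induction s as [|x t IH]; simpl; auto.
  dsym x; simpl; intros; try discriminate; auto.
Qed.

Theorem lemma4p8 (l0 : nat) (w : list bool) :
  1 <= l0 ->
  length w = 4 * l0 ->
  apply_word s0 w <> empty_str ->
  2 * l0 <= F_off (apply_word s0 w) \/ maximally_expanded (apply_word s0 w).
Proof.
  intros H1 H2 H3.
  destruct (main_inv w s0 eq_refl H3) as [A [B C]].
  pose proof (oz_len w).
  change (F_off s0) with 1 in A. change (U s0) with 1 in C.
  destruct (le_lt_dec l0 (ones w)); [left; lia|].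
  right. destruct C as [C|C]; [apply maxexp; auto|lia].
Qed.
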